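(* Consider the constrained online prediction problem and the \texttt{BanditQ} policy described in the context, run for $T$ rounds with $V_t=V=\Theta(\sqrt{T})$ for $1\le t\le T$. Then $\mathrm{Regret}_T=O(T^{3/4})$, where the constant hidden in $O(\cdot)$ does not depend on $T$ or on the reward sequence (it may depend on $N$ and on the constant in $V=\Theta(\sqrt{T})$).
   Context: There are $N$ users. On each round $t=1,2,\dots$ an online policy chooses a probability vector $\bm{x}(t)=(x_1(t),\dots,x_N(t))$ in the standard simplex $\Delta_N=\{\bm{x}\in\mathbb{R}^N_{\ge 0}:\sum_i x_i=1\}$; afterwards an adversarially chosen reward vector $\bm{r}(t)=(r_1(t),\dots,r_N(t))\in[0,1]^N$ is revealed (full information), and the policy may use all past reward vectors to choose $\bm{x}(t+1)$. A subset $\mathcal{P}\subseteq[N]$ of protected users is given, with target rates $\lambda_i\in[0,1]$, $i\in\mathcal{P}$, satisfying $\sum_{i\in\mathcal{P}}\lambda_i\le 1$; set $\lambda_i=0$ for $i\notin\mathcal{P}$. The feasible set of stationary actions is $\Omega=\{\bm{x}^*\in\Delta_N : r_i(t)x^*_i\ge\lambda_i \text{ for all } i\in\mathcal{P} \text{ and all rounds } t\}$, which is assumed nonempty. The regret of a policy over $T$ rounds is $\mathrm{Regret}_T=\sup_{\bm{x}^*\in\Omega}\sum_{t=1}^T\sum_{i=1}^N r_i(t)\,(x_i^*-x_i(t))$. The \texttt{BanditQ} policy: for each $i\in\mathcal{P}$ maintain $Q_i(0)=0$ and $Q_i(t)=\max\big(0,\,Q_i(t-1)+\lambda_i-r_i(t)x_i(t)\big)$;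 for $i\notin\mathcal{P}$ set $Q_i(t)=0$ for all $t$. Given a non-negative parameter sequence $(V_t)_{t\ge1}$, define surrogate rewards $r'_i(t)=(Q_i(t-1)+V_t)\,r_i(t)$ for all $i\in[N]$. Starting from an arbitrary $\bm{x}(1)\in\Delta_N$, the policy updates by adaptive online gradient ascent: $\bm{x}(t+1)=\Pi_{\Delta_N}\Big(\bm{x}(t)+\bm{r}'(t)\big/\sqrt{2\sum_{\tau=1}^{t}\|\bm{r}'(\tau)\|_2^2}\Big)$, where $\Pi_{\Delta_N}$ denotes Euclidean projection onto $\Delta_N$. *)

(* Defs.v *)
From HB Require Import structures.
From mathcomp Require Import all_boot all_order all_algebra.
From mathcomp Require Import reals.
Set Implicit Arguments. Unset Strict Implicit. Unset Printing Implicit Defensive.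
Import Order.TTheory GRing.Theory Num.Theory.
Local Open Scope ring_scope.

Section BanditQ.
Variables (R : realType) (N : nat).

Definition in_simplex (x : 'I_N -> R) : Prop :=
  (forall i, 0 <= x i) /\ \sum_i x i = 1.

Definition sqnorm (v : 'I_N -> R) : R := \sum_i (v i) ^+ 2.

Definition is_simplex_proj (y p : 'I_N -> R) : Prop :=
  in_simplex p /\
  forall z, in_simplex z -> sqnorm (fun i => y i - p i) <= sqnorm (fun i => y i - z i).

Fixpoint Qlen (P : {set 'I_N}) (lam : 'I_N -> R) (r x : nat -> 'I_N -> R)
    (t : nat) (i : 'I_N) : R :=
  match t with
  | 0 => 0
  | t'.+1 => if i \in P then Num.max 0 (Qlen P lam r x t' i + lam i - r t i * x t i)
             else 0
  end.

Definition surr (P : {set 'I_N}) (lam : 'I_N -> R) (r x : nat -> 'I_N -> R)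
    (V : nat -> R) (t : nat) (i : 'I_N) : R :=
  (Qlen P lam r x t.-1 i + V t) * r t i.

Definition banditQ_run (T : nat) (P : {set 'I_N}) (lam : 'I_N -> R)
    (r x : nat -> 'I_N -> R) (V : nat -> R) : Prop :=
  in_simplex (x 1%N) /\
  forall t : nat, (1 <= t < T)%N ->
    is_simplex_proj
      (fun i => x t i + surr P lam r x V t i /
         Num.sqrt (2 * \sum_(1 <= tau < t.+1) sqnorm (surr P lam r x V tau)))
      (x t.+1).

Definition feasible (T : nat) (P : {set 'I_N}) (lam : 'I_N -> R)
    (r : nat -> 'I_N -> R) (xs : 'I_N -> R) : Prop :=
  in_simplex xs /\
  forall t : nat, (1 <= t <= T)%N -> forall i, i \in P -> lam i <= r t i * xs i.

Definition regret_against (T : nat) (r x : nat -> 'I_N -> R) (xs : 'I_N -> R) : R :=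
  \sum_(1 <= t < T.+1) \sum_i r t i * (xs i - x t i).

End BanditQ.

(* Main.v *)
Require Import Defs.
From HB Require Import structures.
From mathcomp Require Import all_boot all_order all_algebra.
From mathcomp Require Import reals.
From mathcomp Require Import ring lra zify.
Import Order.TTheory GRing.Theory Num.Theory.
Local Open Scope ring_scope.

Section L.
Variables (R : realType) (N : nat).

Lemma sqnorm_ge0 (v : 'I_N -> R) : 0 <= sqnorm v.
Proof. by apply: sumr_ge0 => i _; rewrite sqr_ge0. Qed.

Lemma proj_pyth (y p z : 'I_N -> R) :
  is_simplex_proj y p -> in_simplex z ->
  sqnorm (fun i => p i - z i) <= sqnorm (fun i => y i - z i).
Proof.
move=> [[p0 p1] Hmin] [z0 z1].
set B := \sum_i (y i - p i) * (z i - p i).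
set C := sqnorm (fun i => z i - p i).
have C0 : 0 <= C by apply: sqnorm_ge0.
have key : forall l, 0 < l <= 1 -> 2 * B <= l * C.
  move=> l /andP[l0 l1].
  have hw : in_simplex (fun i => p i + l * (z i - p i)).
    split.
      move=> i; have := p0 i; have := z0 i => zi pi.
      have -> : p i + l * (z i - p i) = (1 - l) * p i + l * z i by ring.
      apply: addr_ge0; apply: mulr_ge0 => //; lra.
    rewrite big_split /= -mulr_sumr sumrB p1 z1; ring.
  have := Hmin _ hw.
  have -> : sqnorm (fun i => y i - (p i + l * (z i - p i))) =
     sqnorm (fun i => y i - p i) - 2 * l * B + l ^+ 2 * C.
    rewrite /sqnorm /B /C mulr_sumr mulr_sumr -sumrB -big_split /=.
    apply: eq_bigr => i _; ring.
  move=> H.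
  have : l * (2 * B) <= l * (l * C) by nra.
  by rewrite ler_pM2l.
have B0 : B <= 0.
  rewrite leNgt; apply/negP => Bp.
  have l0 : 0 < B / (B + C) by apply: divr_gt0 => //; lra.
  have l1 : B / (B + C) <= 1 by rewrite ler_pdivrMr; lra.
  have := key _ (introT andP (conj l0 l1)).
  have : B / (B + C) * C <= B.
    rewrite mulrAC ler_pdivrMr; last lra.
    nra.
  lra.
have -> : sqnorm (fun i => y i - z i) =
   sqnorm (fun i => y i - p i) - 2 * B + sqnorm (fun i => p i - z i).
  rewrite /sqnorm /B mulr_sumr -sumrB -big_split /=.
  apply: eq_bigr => i _; ring.
have := sqnorm_ge0 (fun i => y i - p i); lra.
Qed.


Lemma telesc (s D : nat -> R) n :
  (forall t, 0 <= s t) -> (forall t, s t <= s t.+1) -> (forall t, 0 <= D t <= 2) ->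
  \sum_(1 <= t < n.+1) s t * (D t - D t.+1) <= 2 * s n - s n * D n.+1.
Proof.
move=> s0 sm D2; elim: n => [|n IH].
  rewrite big_geq //; have := D2 1%N; have := s0 0%N => h1 h2; nra.
rewrite big_nat_recr //=.
have := D2 n.+1; have := sm n; have := s0 n => h1 h2 h3.
nra.
Qed.

Lemma sum_a_s (s a : nat -> R) n :
  (forall t, 0 <= s t) -> (forall t, 0 <= a t) ->
  (forall t, s t.+1 ^+ 2 = s t ^+ 2 + 2 * a t.+1) ->
  \sum_(1 <= t < n.+1) a t / s t <= s n - s 0%N.
Proof.
move=> s0 a0 sq; elim: n => [|n IH]; first by rewrite big_geq // subrr.
rewrite big_nat_recr //=.
suff : a n.+1 / s n.+1 <= s n.+1 - s n by lra.
have := sq n; have := s0 n; have := s0 n.+1; have := a0 n.+1 => h1 h2 h3 h4.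
have [se|sp] := eqVneq (s n.+1) 0.
  rewrite se invr0 mulr0; rewrite se in h4; nra.
have spos : 0 < s n.+1 by rewrite lt_def sp.
rewrite ler_pdivrMr //; nra.
Qed.

Lemma step_ineq (xt z g : 'I_N -> R) (s Dn : R) :
  0 <= s -> (s = 0 -> forall i, g i = 0) ->
  Dn <= sqnorm (fun i => xt i + g i / s - z i) ->
  \sum_i g i * (z i - xt i) <=
    s / 2 * (sqnorm (fun i => xt i - z i) - Dn) + sqnorm g / (2 * s).
Proof.
move=> s0 hg hD.
have [s_eq|sn] := eqVneq s 0.
  have g0 := hg s_eq; rewrite s_eq big1; last by move=> i _; rewrite g0 mul0r.
  rewrite mul0r mul0r mulr0 invr0 mulr0 addr0 //.
have sp : 0 < s by rewrite lt_def sn.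
set A := sqnorm (fun i => xt i - z i).
set B := \sum_i g i * (z i - xt i).
set G := sqnorm g.
have E : sqnorm (fun i => xt i + g i / s - z i) = A - 2 / s * B + G / s ^+ 2.
  rewrite /A /B /G /sqnorm mulr_sumr mulr_suml -sumrB -big_split /=.
  apply: eq_bigr => i _; field; exact: sn.
rewrite E in hD.
have := ler_wpM2l (_ : 0 <= s / 2) hD.
have -> : s / 2 * (A - 2 / s * B + G / s ^+ 2) = s / 2 * A - B + G / (2 * s).
  by field; exact: sn.
move=> h; lra.
Qed.


Section Main.
Variables (T : nat) (V : R) (P : {set 'I_N}) (lam : 'I_N -> R) (r x : nat -> 'I_N -> R)
  (xs : 'I_N -> R).
Hypothesis V0 : 0 <= V.
Hypothesis lam01 : forall i, i \in P -> 0 <= lam i <= 1.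
Hypothesis r01 : forall t i, (1 <= t <= T)%N -> 0 <= r t i <= 1.
Hypothesis run : banditQ_run T P lam r x (fun _ => V).
Hypothesis feas : feasible T P lam r xs.

Let Q t i := Qlen P lam r x t i.
Let g t := surr P lam r x (fun _ => V) t.
Let G t := \sum_(1 <= tau < t.+1) sqnorm (g tau).
Let s t := Num.sqrt (2 * G t).
Let L t := \sum_i Q t i ^+ 2.
Let D t := if (1 <= t <= T)%N then sqnorm (fun i => x t i - xs i) else 0.

Lemma xsimp t : (1 <= t <= T)%N -> in_simplex (x t).
Proof.
case: run => x1 hrun; elim: t => [//|t IH] /andP[_ tT].
case: t IH hrun tT => [|t] IH hrun tT; first exact: x1.
by have [] := hrun t.+1 (introT andP (conj isT tT)).
Qed.

Lemma x01 t i : (1 <= t <= T)%N -> 0 <= x t i <= 1.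
Proof.
move=> /xsimp [h0 h1]; rewrite h0 /= -h1.
rewrite (bigD1 i) //= lerDl; apply: sumr_ge0 => j _; exact: h0.
Qed.

Lemma Q_ge0 t i : 0 <= Q t i.
Proof. rewrite /Q; case: t => [|t] /=; first by []. by case: ifP => // _; rewrite le_max lexx. Qed.

Lemma Q_notP t i : i \notin P -> Q t i = 0.
Proof. by move=> /negbTE hi; case: t => [|t] //=; rewrite /Q /= hi. Qed.

Lemma G_ge0 t : 0 <= G t.
Proof. by apply: sumr_ge0 => k _; apply: sqnorm_ge0. Qed.

Lemma s_ge0 t : 0 <= s t.
Proof. exact: sqrtr_ge0. Qed.

Lemma G_S t : G t.+1 = G t + sqnorm (g t.+1).
Proof. by rewrite /G big_nat_recr. Qed.

Lemma s_mono t : s t <= s t.+1.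
Proof.
rewrite /s ler_sqrt; last by rewrite mulr_ge0 // G_ge0.
by rewrite G_S; have := sqnorm_ge0 (g t.+1); lra.
Qed.

Lemma s_mono_le m n : (m <= n)%N -> s m <= s n.
Proof.
elim: n => [|n IH]; first by rewrite leqn0 => /eqP ->.
rewrite leq_eqVlt => /orP[/eqP -> //|]; rewrite ltnS => /IH h.
exact: le_trans h (s_mono n).
Qed.

Lemma s_sq t : s t ^+ 2 = 2 * G t.
Proof. by rewrite sqr_sqrtr // mulr_ge0 // G_ge0. Qed.

Lemma D01 t : 0 <= D t <= 2.
Proof.
rewrite /D; case: ifP => ht; last by rewrite lexx /=; lra.
have [x0 x1] := xsimp t ht; have [z0 z1] := feas.1.
rewrite sqnorm_ge0 /= /sqnorm.
apply: (@le_trans _ _ (\sum_i (x t i + xs i))).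
  apply: ler_sum => i _; have := x01 t i ht; have := z0 i => h1 /andP[h2 h3].
  have : xs i <= 1.
    rewrite -z1 (bigD1 i) //= lerDl; apply: sumr_ge0 => j _; exact: z0.
  nra.
by rewrite big_split /= x1 z1; lra.
Qed.

Lemma g_zero t : (0 < t)%N -> s t = 0 -> forall i, g t i = 0.
Proof.
case: t => [//|t] _.
move=> /eqP; rewrite sqrtr_eq0 => hG i.
have h1 : sqnorm (g t.+1) <= 0.
  by move: hG; rewrite G_S; have := G_ge0 t; have := sqnorm_ge0 (g t.+1); lra.
have : g t.+1 i ^+ 2 <= 0.
  apply: le_trans h1; rewrite /sqnorm (bigD1 i) //= lerDl.
  by apply: sumr_ge0 => j _; rewrite sqr_ge0.
by move=> h; apply/eqP; rewrite -sqrf_eq0 eq_le h sqr_ge0.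
Qed.

Lemma step_t t : (1 <= t <= T)%N ->
  \sum_i g t i * (xs i - x t i) <= (s t * (D t - D t.+1) + sqnorm (g t) / s t) / 2.
Proof.
move=> ht.
have hD : D t.+1 <= sqnorm (fun i => x t i + g t i / s t - xs i).
  rewrite /D; case: ifP => ht1; last exact: sqnorm_ge0.
  have tT : (1 <= t < T)%N by move: ht ht1; lia.
  have hp := run.2 t tT.
  exact: (proj_pyth _ _ _ hp feas.1).
have tp : (0 < t)%N by move: ht; lia.
have := step_ineq (x t) xs (g t) (s t) (D t.+1) (s_ge0 t) (g_zero t tp) hD.
rewrite /D ht invfM => h; apply: le_trans h _.
rewrite le_eqVlt; apply/orP; left; apply/eqP; ring.
Qed.

Lemma ogd n : (n <= T)%N ->
  \sum_(1 <= t < n.+1) \sum_i g t i * (xs i - x t i) <= 2 * s n.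
Proof.
move=> nT.
apply: le_trans (_ : \sum_(1 <= t < n.+1)
   ((s t * (D t - D t.+1) + sqnorm (g t) / s t) / 2) <= _).
  apply: ler_sum_nat => t ht; apply: step_t; move: ht nT; lia.
rewrite -mulr_suml big_split /=.
have h1 := telesc s D n s_ge0 s_mono D01.
have hsq : forall t, s t.+1 ^+ 2 = s t ^+ 2 + 2 * sqnorm (g t.+1).
  by move=> t; rewrite !s_sq G_S; ring.
have h2 := @sum_a_s s (fun t => sqnorm (g t)) n s_ge0 (fun t => sqnorm_ge0 _) hsq.
have h3 : 0 <= s n * D n.+1 by rewrite mulr_ge0 ?s_ge0 //; case/andP: (D01 n.+1).
have h4 := s_ge0 0.
have h5 := s_ge0 n. lra.
Qed.

Lemma drift t : (1 <= t <= T)%N ->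
  L t - L t.-1 <= 2 * \sum_i g t i * (xs i - x t i)
                  - 2 * V * \sum_i r t i * (xs i - x t i) + N%:R.
Proof.
case: t => [//|t] ht /=.
have -> : N%:R = \sum_(i : 'I_N) (1:R) by rewrite sumr_const card_ord.
rewrite /L !mulr_sumr -!sumrB -!big_split /=; apply: ler_sum => i _.
have q0 := Q_ge0 t i.
rewrite /Q /g /surr /=; rewrite /Q in q0.
have hr := r01 t.+1 i ht; have hx := x01 t.+1 i ht.
case: ifP => hi.
  set q := Qlen P lam r x t i in q0 *.
  set w := q + lam i - r t.+1 i * x t.+1 i.
  have hl := lam01 i hi.
  have hf := feas.2 t.+1 ht i hi.
  have hm : Num.max 0 w ^+ 2 <= w ^+ 2.
    case: (lerP 0 w) => hw //.
    by rewrite expr0n /= sqr_ge0.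
  have hrx : 0 <= r t.+1 i * x t.+1 i <= 1.
    case/andP: hr => hr1 hr2; case/andP: hx => hx1 hx2.
    apply/andP; split; nra.
  have hsq : (lam i - r t.+1 i * x t.+1 i) ^+ 2 <= 1.
    case/andP: hrx => h1 h2; case/andP: hl => h3 h4; nra.
  have hq : q * (lam i - r t.+1 i * x t.+1 i) <= q * (r t.+1 i * (xs i - x t.+1 i)).
    by apply: ler_wpM2l => //; lra.
  have ew : w ^+ 2 = q ^+ 2 + 2 * q * (lam i - r t.+1 i * x t.+1 i)
                     + (lam i - r t.+1 i * x t.+1 i) ^+ 2.
    by rewrite /w; ring.
  rewrite ew in hm.
  lra.
have hi' : i \notin P by rewrite hi.
have := Q_notP t i hi'; rewrite /Q => ->.
have -> : (0 : R) ^+ 2 = 0 by rewrite expr0n.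
lra.
Qed.

Let OGD n := \sum_(1 <= t < n.+1) \sum_i g t i * (xs i - x t i).
Let Reg n := \sum_(1 <= t < n.+1) \sum_i r t i * (xs i - x t i).

Lemma Lbound n : (n <= T)%N ->
  L n <= 2 * OGD n - 2 * V * Reg n + N%:R * n%:R.
Proof.
elim: n => [|n IH] nT.
  rewrite /L /OGD /Reg !big_geq // big1; last by move=> i _; rewrite /Q /= expr0n.
  by rewrite !mulr0 subrr add0r.
have hn : (1 <= n.+1 <= T)%N by move: nT; lia.
have /= h := drift n.+1 hn.
have h2 := IH (ltnW nT).
have e1 : OGD n.+1 = OGD n + \sum_i g n.+1 i * (xs i - x n.+1 i) by rewrite /OGD big_nat_recr.
have e2 : Reg n.+1 = Reg n + \sum_i r n.+1 i * (xs i - x n.+1 i) by rewrite /Reg big_nat_recr.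
have e3 : (n.+1)%:R = n%:R + 1 :> R by rewrite -addn1 natrD.
rewrite e1 e2 e3.
lra.
Qed.

Lemma Reg_lb n : (n <= T)%N -> - (n%:R) <= Reg n.
Proof.
move=> nT.
apply: le_trans (_ : \sum_(1 <= t < n.+1) (-1) <= _).
  by rewrite sumr_const_nat subn1 /= mulNrn.
apply: ler_sum_nat => t ht.
have htT : (1 <= t <= T)%N by move: ht nT; lia.
have [x0 x1] := xsimp t htT.
rewrite -x1 -sumrN; apply: ler_sum => i _.
have := r01 t i htT; have := x01 t i htT; have := feas.1.1 i => h1 /andP[h2 h3] /andP[h4 h5].
nra.
Qed.

Lemma L_le n : (n <= T)%N -> L n <= 4 * s T + (2 * V + N%:R) * T%:R.
Proof.
move=> nT.
have h1 := Lbound n nT.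
have h2 := ogd n nT.
have h3 := Reg_lb n nT.
have h4 := s_mono_le n T nT.
have h5 : n%:R <= T%:R :> R by rewrite ler_nat.
have h6 : 0 <= N%:R :> R by [].
have h7 : 0 <= n%:R :> R by [].
have h8 : 0 <= V * (Reg n + n%:R) by apply: mulr_ge0 => //; lra.
have h9 : 0 <= V * (T%:R - n%:R) by apply: mulr_ge0 => //; lra.
have h10 : 0 <= N%:R * (T%:R - n%:R) :> R by apply: mulr_ge0 => //; lra.
rewrite -/(OGD n) in h2. lra.
Qed.

Lemma a_le t : (1 <= t <= T)%N -> sqnorm (g t) <= 2 * L t.-1 + 2 * N%:R * V ^+ 2.
Proof.
move=> ht.
have -> : 2 * N%:R * V ^+ 2 = \sum_(i : 'I_N) 2 * V ^+ 2.
  by rewrite sumr_const card_ord -mulr_natl; ring.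
rewrite /L mulr_sumr -big_split /=; apply: ler_sum => i _.
rewrite /g /surr /=.
have := Q_ge0 t.-1 i; rewrite /Q => hq.
have := r01 t i ht => /andP[hr1 hr2].
set q := Qlen _ _ _ _ _ _ in hq *.
have e1 : ((q + V) * r t i) ^+ 2 = (q + V) ^+ 2 * r t i ^+ 2 by ring.
have e2 : r t i ^+ 2 <= 1 by nra.
have e3 : (q + V) ^+ 2 * r t i ^+ 2 <= (q + V) ^+ 2.
  by rewrite -[X in _ <= X]mulr1; apply: ler_wpM2l => //; rewrite sqr_ge0.
have e4 : 0 <= (q - V) ^+ 2 by rewrite sqr_ge0.
rewrite e1; apply: le_trans e3 _.
have e5 : (q + V) ^+ 2 = 2 * q ^+ 2 + 2 * V ^+ 2 - (q - V) ^+ 2 by ring.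
rewrite e5; lra.
Qed.

Lemma G_le : G T <= T%:R * (8 * s T + 2 * (2 * V + N%:R) * T%:R + 2 * N%:R * V ^+ 2).
Proof.
apply: le_trans (_ : \sum_(1 <= t < T.+1) (8 * s T + 2 * (2 * V + N%:R) * T%:R + 2 * N%:R * V ^+ 2) <= _); last first.
  by rewrite sumr_const_nat subn1 /= -[X in X <= _]mulr_natl.
apply: ler_sum_nat => t ht.
have htT : (1 <= t <= T)%N by move: ht; lia.
apply: le_trans (a_le t htT) _.
have htm : (t.-1 <= T)%N by move: ht; lia.
have := L_le t.-1 htm.
lra.
Qed.

Lemma final_reg : 2 * V * Reg T <= 4 * s T + N%:R * T%:R.
Proof.
have h1 := Lbound T (leqnn T).
have h2 := ogd T (leqnn T).
have h0 : 0 <= L T by apply: sumr_ge0 => i _; rewrite sqr_ge0.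
rewrite /OGD /Reg in h1 h2 *.
lra.
Qed.

End Main.
End L.

Lemma numeric (R : realType) (c1 c2 Nn tau V S G Reg : R) :
  0 < c1 -> c1 <= c2 -> 0 <= Nn -> 1 <= tau ->
  c1 * tau ^+ 2 <= V -> V <= c2 * tau ^+ 2 -> 0 <= S -> S ^+ 2 = 2 * G ->
  G <= tau ^+ 4 * (8 * S + 2 * (2 * V + Nn) * tau ^+ 4 + 2 * Nn * V ^+ 2) ->
  2 * V * Reg <= 4 * S + Nn * tau ^+ 4 ->
  Reg <= (4 * (17 + (8 * c2 + 4 * Nn + 4 * Nn * c2 ^+ 2)) + Nn) / (2 * c1) * tau ^+ 3.
Proof.
move=> c1p c12 N0 tau1 hV1 hV2 S0 hSG hG hR.
set K := 8 * c2 + 4 * Nn + 4 * Nn * c2 ^+ 2.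
set M := 17 + K.
have c20 : 0 < c2 by lra.
have K0 : 0 <= K by rewrite /K; have := sqr_ge0 c2; nra.
have t2 : 1 <= tau ^+ 2 by nra.
have V0 : 0 < V by nra.
have t4 : 1 <= tau ^+ 4 by rewrite (_ : 4 = 2 * 2)%N // exprM; nra.
have t45 : tau ^+ 4 <= tau ^+ 5 by rewrite exprS; nra.
have e8 : tau ^+ 8 = tau ^+ 4 * tau ^+ 4 by rewrite -exprD.
have e10 : tau ^+ 10 = tau ^+ 5 * tau ^+ 5 by rewrite -exprD.
have e10' : tau ^+ 10 = tau ^+ 2 * tau ^+ 8 by rewrite -exprD.
have e5 : tau ^+ 5 = tau ^+ 2 * tau ^+ 3 by rewrite -exprD.
have t810 : tau ^+ 8 <= tau ^+ 10 by rewrite e10'; nra.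
have t8 : 1 <= tau ^+ 8 by nra.
have hVV : V ^+ 2 <= c2 ^+ 2 * tau ^+ 4.
  rewrite (_ : 4 = 2 * 2)%N // exprM -exprMn; nra.
have hb : 4 * (2 * V + Nn) * tau ^+ 8 + 4 * Nn * V ^+ 2 * tau ^+ 4 <= K * tau ^+ 10.
  have a1 : V * tau ^+ 8 <= c2 * tau ^+ 10 by rewrite e10'; nra.
  have a2 : Nn * tau ^+ 8 <= Nn * tau ^+ 10 by nra.
  have a3 : Nn * V ^+ 2 * tau ^+ 4 <= Nn * c2 ^+ 2 * tau ^+ 10.
    have : V ^+ 2 * tau ^+ 4 <= c2 ^+ 2 * tau ^+ 8 by rewrite e8; nra.
    have : c2 ^+ 2 * tau ^+ 8 <= c2 ^+ 2 * tau ^+ 10 by have := sqr_ge0 c2; nra.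
    nra.
  rewrite /K; nra.
have hS2 : S ^+ 2 <= 16 * tau ^+ 4 * S + K * tau ^+ 10.
  rewrite hSG; rewrite e8 in hb; nra.
have hS : S <= M * tau ^+ 5.
  rewrite leNgt; apply/negP => hlt.
  have b1 : M * tau ^+ 5 * S < S ^+ 2.
    have t5p : 0 < tau ^+ 5 by lra.
    have : 0 < M * tau ^+ 5 by rewrite /M; nra.
    nra.
  have b2 : 16 * tau ^+ 4 * S <= 16 * tau ^+ 5 * S by nra.
  have b3 : K * tau ^+ 10 < (K + 1) * tau ^+ 5 * S.
    rewrite e10.
    have : (K + 1) * tau ^+ 5 * (M * tau ^+ 5) < (K + 1) * tau ^+ 5 * S.
      by rewrite ltr_pM2l //; nra.
    have : K * (tau ^+ 5 * tau ^+ 5) < (K + 1) * tau ^+ 5 * (M * tau ^+ 5).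
      rewrite /M; nra.
    lra.
  have : M * tau ^+ 5 * S = 16 * tau ^+ 5 * S + (K + 1) * tau ^+ 5 * S by rewrite /M; ring.
  lra.
have hR2 : 2 * V * Reg <= (4 * M + Nn) * tau ^+ 5 by nra.
have [Rn|Rp] := lerP Reg 0.
  apply: le_trans Rn _; apply: mulr_ge0; last by rewrite exprn_ge0 //; lra.
  by apply: divr_ge0; rewrite /M; nra.
rewrite mulrAC ler_pdivlMr; last lra.
have : 2 * c1 * tau ^+ 2 * Reg <= 2 * V * Reg by nra.
rewrite e5 in hR2.
have t2p : 0 < tau ^+ 2 by lra.
move=> h.
have : tau ^+ 2 * (Reg * (2 * c1)) <= tau ^+ 2 * ((4 * M + Nn) * tau ^+ 3) by nra.
by rewrite ler_pM2l.
Qed.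

Theorem proposition3 (R : realType) (N : nat) (c1 c2 : R) :
  0 < c1 -> c1 <= c2 ->
  exists C : R, forall (T : nat) (V : R),
    (1 <= T)%N ->
    c1 * Num.sqrt T%:R <= V -> V <= c2 * Num.sqrt T%:R ->
    forall (P : {set 'I_N}) (lam : 'I_N -> R) (r x : nat -> 'I_N -> R),
      (forall i, i \in P -> 0 <= lam i <= 1) ->
      (forall i, i \notin P -> lam i = 0) ->
      \sum_(i in P) lam i <= 1 ->
      (forall t i, (1 <= t <= T)%N -> 0 <= r t i <= 1) ->
      banditQ_run T P lam r x (fun _ => V) ->
      forall xs : 'I_N -> R, feasible T P lam r xs ->
        regret_against T r x xs <=
          C * (Num.sqrt T%:R * Num.sqrt (Num.sqrt T%:R)).
Proof.
move=> c1p c12.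
exists ((4 * (17 + (8 * c2 + 4 * N%:R + 4 * N%:R * c2 ^+ 2)) + N%:R) / (2 * c1)).
move=> T V T1 hV1 hV2 P lam r x hlam _ _ hr run xs feas.
set tau := Num.sqrt (Num.sqrt T%:R).
have ew : Num.sqrt T%:R = tau ^+ 2 by rewrite sqr_sqrtr // sqrtr_ge0.
have eT : T%:R = tau ^+ 4 :> R.
  by rewrite (_ : 4 = 2 * 2)%N // exprM -ew sqr_sqrtr // ler0n.
have tau1 : 1 <= tau.
  rewrite /tau -{1}sqrtr1 ler_sqrt ?sqrtr_ge0 // -{1}sqrtr1 ler_sqrt //.
  by rewrite ler1n.
have V0 : 0 <= V.
  apply: le_trans hV1; apply: mulr_ge0; [lra | exact: sqrtr_ge0].
have hf := final_reg R N T V P lam r x xs V0 hlam hr run feas.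
have hg := G_le R N T V P lam r x xs V0 hlam hr run feas.
simpl in hf, hg.
rewrite ew in hV1 hV2.
rewrite eT in hf hg.
rewrite ew -exprSr.
have h2G : 0 <= 2 * \sum_(1 <= t < T.+1) sqnorm (surr P lam r x (fun=> V) t).
  by rewrite mulr_ge0 // sumr_ge0 // => t _; apply: sqnorm_ge0.
exact: (@numeric R c1 c2 N%:R tau V _ _ _ c1p c12 (ler0n _ N) tau1 hV1 hV2 (sqrtr_ge0 _) (sqr_sqrtr h2G) hg hf).
Qed.
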